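(* For every $\alpha\in(0,1)$, \[ \sum_{t=1}^\infty\Big(1-\frac{1}{t^\alpha}\Big)^t\ \le\ \frac{1}{1-\alpha}\,\Gamma\Big(\frac{1}{1-\alpha}\Big). \]
   Context: $\Gamma(z)=\int_0^\infty t^{z-1}e^{-t}\,dt$ is the Gamma function. *)

(* Defs.v *)
From Stdlib Require Import Reals.
From Coquelicot Require Import Coquelicot.
Open Scope R_scope.

Definition Gamma (s : R) : R :=
  RInt_gen (fun t => Rpower t (s - 1) * exp (- t))
           (at_right 0) (Rbar_locally p_infty).

Definition term (alpha : R) (t : nat) : R :=
  (1 - 1 / Rpower (INR t) alpha) ^ t.

(* Main.v *)
Require Import Defs.
From Stdlib Require Import Reals Lra Classical.
From Coquelicot Require Import Coquelicot.
Open Scope R_scope.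

Lemma exp_le (x y : R) : x <= y -> exp x <= exp y.
Proof. intros H. destruct (Rle_lt_or_eq_dec _ _ H) as [H'|H'].
  left; now apply exp_increasing. rewrite H'; lra. Qed.

Lemma cont_pow (c u : R) : 0 < u -> continuous (fun x => Rpower x c) u.
Proof.
  intros Hu. apply continuity_pt_filterlim.
  apply derivable_continuous_pt.
  exact (exist _ _ (derivable_pt_lim_power u c Hu)).
Qed.

Lemma cont_expo (u : R) : continuous (fun x => exp (- x)) u.
Proof.
  apply continuity_pt_filterlim.
  apply derivable_continuous_pt.
  apply derivable_pt_comp. apply derivable_pt_opp, derivable_pt_id.
  apply derivable_pt_exp.
Qed.

Lemma cont_f (c u : R) : 0 < u -> continuous (fun x => Rpower x c * exp (- x)) u.
Proof.
  intros Hu. apply (continuous_mult (fun x => Rpower x c) (fun x => exp (-x))).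
  now apply cont_pow. apply cont_expo.
Qed.

Lemma exRInt_f (c a b : R) : 0 < a -> a <= b -> ex_RInt (fun x => Rpower x c * exp (- x)) a b.
Proof.
  intros Ha Hab. apply (@ex_RInt_continuous R_CompleteNormedModule). intros z Hz.
  rewrite Rmin_left in Hz by lra. apply cont_f. lra.
Qed.

Lemma f_nonneg (c u : R) : 0 <= Rpower u c * exp (- u).
Proof.
  unfold Rpower. assert (H1 := exp_pos (c * ln u)). assert (H2 := exp_pos (- u)). nra.
Qed.

Lemma f_bound (c u : R) : 0 < c -> 0 < u ->
  Rpower u c * exp (- u) <= exp (c * (-1 - ln (/ (2 * c)))) * exp (- u / 2).
Proof.
  intros Hc Hu.
  set (k := / (2 * c)).
  assert (Hk : 0 < k) by (unfold k; apply Rinv_0_lt_compat; lra).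
  assert (H1 : 1 + ln (k * u) <= k * u).
  { rewrite <- (exp_ln (k * u)) at 2 by nra. apply exp_ineq1_le. }
  rewrite ln_mult in H1 by lra.
  assert (Hck : c * k = / 2) by (unfold k; field; lra).
  assert (H2 : c * ln u <= u / 2 + c * (-1 - ln k)).
  { assert (c * (1 + (ln k + ln u)) <= c * (k * u)) by (apply Rmult_le_compat_l; lra).
    replace (c * (k * u)) with (u/2) in H by (rewrite <- Rmult_assoc, Hck; field). lra. }
  unfold Rpower. rewrite <- !exp_plus. apply exp_le. lra.
Qed.

Lemma RInt_f_bound (c a b : R) : 0 < c -> 0 < a -> a <= b ->
  RInt (fun x => Rpower x c * exp (- x)) a b <= 2 * exp (c * (-1 - ln (/ (2 * c)))).
Proof.
  intros Hc Ha Hab. set (K := exp (c * (-1 - ln (/ (2 * c))))).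
  assert (HK : 0 < K) by apply exp_pos.
  assert (Hi : is_RInt (fun x => K * exp (- x / 2)) a b
                 (minus ((fun x => -2 * K * exp (- x / 2)) b) ((fun x => -2 * K * exp (- x / 2)) a))).
  { apply (@is_RInt_derive R_CompleteNormedModule (fun x => -2 * K * exp (- x / 2))).
    - intros x _. auto_derive. auto. change (-2 * K * (- (1) * / 2 * exp (- x * / 2)) = K * exp (- x * / 2)); field.
    - intros x _. apply (continuous_mult (fun _ => K) (fun x => exp (- x / 2))).
      apply continuous_const.
      apply (@ex_derive_continuous R_AbsRing R_NormedModule). auto_derive. auto. }
  apply Rle_trans with (RInt (fun x => K * exp (- x / 2)) a b).
  - apply RInt_le; auto. apply exRInt_f; auto. eexists; exact Hi.
    intros x Hx. unfold K. apply f_bound; lra.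
  - rewrite (is_RInt_unique _ _ _ _ Hi). unfold minus, plus, opp; simpl.
    assert (H1 := exp_pos (- a / 2)). assert (H2 := exp_pos (- b / 2)).
    assert (exp (- a / 2) <= 1). { rewrite <- exp_0. apply exp_le. lra. }
    nra.
Qed.

Lemma gen_exists (f : R -> R) (M : R) :
  (forall x, 0 < x -> 0 <= f x) ->
  (forall a b, 0 < a -> a <= b -> ex_RInt f a b) ->
  (forall a b, 0 < a -> a <= b -> RInt f a b <= M) ->
  exists l, is_RInt_gen f (at_right 0) (Rbar_locally p_infty) l /\
    (forall a b, 0 < a -> a <= b -> RInt f a b <= l).
Proof.
  intros Hpos Hex HM.
  set (E := fun y => exists a b, 0 < a /\ a <= b /\ y = RInt f a b).
  destruct (completeness E) as [l [Hub Hlub]].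
  { exists M. intros y [a [b [Ha [Hab ->]]]]. auto. }
  { exists (RInt f 1 1). exists 1, 1. repeat split; lra. }
  assert (Hle : forall a b, 0 < a -> a <= b -> RInt f a b <= l).
  { intros a b Ha Hab. apply Hub. exists a, b; auto. }
  exists l. split; [|exact Hle].
  intros P [eps HP].
  assert (Hex0 : exists a0 b0, 0 < a0 /\ a0 <= b0 /\ l - eps < RInt f a0 b0).
  { apply NNPP. intros Hn. assert (l <= l - eps).
    { apply Hlub. intros y [a [b [Ha [Hab ->]]]].
      apply Rnot_lt_le. intros Hc. apply Hn. exists a, b; auto. }
    destruct eps; simpl in *; lra. }
  destruct Hex0 as [a0 [b0 [Ha0 [Hab0 Hl0]]]].
  apply (Filter_prod _ _ _ (fun a => 0 < a < a0) (fun b => b0 < b)).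
  - exists (mkposreal a0 Ha0). intros y Hy Hy0. unfold ball in Hy; simpl in Hy.
    unfold AbsRing_ball, abs, minus, plus, opp in Hy; simpl in Hy.
    rewrite Ropp_0, Rplus_0_r in Hy. apply Rabs_def2 in Hy. lra.
  - exists b0. auto.
  - intros x y Hx Hy. simpl. exists (RInt f x y). split.
    + apply (@RInt_correct R_CompleteNormedModule). apply Hex; lra.
    + apply HP. unfold ball; simpl. unfold AbsRing_ball, abs, minus, plus, opp; simpl.
      assert (E1 : RInt f x a0 + RInt f a0 b0 + RInt f b0 y = RInt f x y).
      { rewrite <- (RInt_Chasles f x b0 y). rewrite <- (RInt_Chasles f x a0 b0).
        reflexivity. all: apply Hex; lra. }
      assert (0 <= RInt f x a0).
      { apply RInt_ge_0. lra. apply Hex; lra. intros z Hz; apply Hpos; lra. }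
      assert (0 <= RInt f b0 y).
      { apply RInt_ge_0. lra. apply Hex; lra. intros z Hz; apply Hpos; lra. }
      assert (RInt f x y <= l) by (apply Hle; lra).
      apply Rabs_def1; lra.
Qed.

Lemma Rpower_ge1 (x y : R) : 1 <= x -> 0 <= y -> 1 <= Rpower x y.
Proof.
  intros Hx Hy. rewrite <- (Rpower_O x) by lra. apply Rle_Rpower; lra.
Qed.

Lemma term_bound (alpha x : R) (n : nat) : 0 < alpha -> INR n = x -> 1 <= x ->
  0 <= (1 - 1 / Rpower x alpha) ^ n <= exp (- Rpower x (1 - alpha)).
Proof.
  intros Ha Hn Hx.
  assert (H1 : 1 <= Rpower x alpha) by (apply Rpower_ge1; lra).
  set (y := 1 / Rpower x alpha).
  assert (Hy : 0 < y <= 1).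
  { unfold y. split. apply Rdiv_lt_0_compat; lra.
    unfold Rdiv. rewrite Rmult_1_l. rewrite <- Rinv_1. apply Rinv_le_contravar; lra. }
  split. apply pow_le. lra.
  apply Rle_trans with (exp (- y) ^ n).
  - apply pow_incr. split. lra. assert (H := exp_ineq1_le (- y)). lra.
  - assert (E : exp (- y) ^ n = exp (- (y * x))).
    { rewrite <- Rpower_pow by apply exp_pos. unfold Rpower. rewrite ln_exp, Hn.
      f_equal. ring. }
    rewrite E. right. f_equal. f_equal.
    unfold y. unfold Rminus. rewrite Rpower_plus, Rpower_Ropp, Rpower_1 by lra.
    field. lra.
Qed.

Lemma piece (s beta x : R) : 0 < beta -> s * beta = 1 -> 0 < s -> 1 <= x ->
  exp (- Rpower (x + 1) beta) <=
  s * RInt (fun u => Rpower u (s - 1) * exp (- u)) (Rpower x beta) (Rpower (x + 1) beta).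
Proof.
  intros Hb Hsb Hs Hx.
  set (a := Rpower x beta). set (b := Rpower (x + 1) beta).
  assert (Ha : 1 <= a) by (apply Rpower_ge1; lra).
  assert (Hab : a <= b) by (apply Rle_Rpower_l; lra).
  set (E := exp (- b)).
  assert (Hi : is_RInt (fun u => E * (s * Rpower u (s - 1))) a b
                 (minus ((fun u => E * Rpower u s) b) ((fun u => E * Rpower u s) a))).
  { apply (@is_RInt_derive R_CompleteNormedModule (fun u => E * Rpower u s)).
    - intros u Hu. rewrite Rmin_left in Hu by lra. apply is_derive_scal.
      apply is_derive_Reals. apply derivable_pt_lim_power. lra.
    - intros u Hu. rewrite Rmin_left in Hu by lra.
      apply (continuous_mult (fun _ => E) (fun u => s * Rpower u (s - 1))).
      apply continuous_const.
      apply (continuous_mult (fun _ => s) (fun u => Rpower u (s - 1))).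
      apply continuous_const. apply cont_pow. lra. }
  assert (Eb : Rpower b s = x + 1).
  { unfold b. rewrite Rpower_mult. rewrite Rmult_comm, Hsb. apply Rpower_1. lra. }
  assert (Ea : Rpower a s = x).
  { unfold a. rewrite Rpower_mult. rewrite Rmult_comm, Hsb. apply Rpower_1. lra. }
  assert (HE : RInt (fun u => E * (s * Rpower u (s - 1))) a b = E).
  { rewrite (is_RInt_unique _ _ _ _ Hi). simpl. rewrite Eb, Ea.
    unfold minus, plus, opp; simpl. ring. }
  rewrite <- HE.
  assert (Hex : ex_RInt (fun u => Rpower u (s - 1) * exp (- u)) a b) by (apply exRInt_f; lra).
  assert (Hs2 : s * RInt (fun u => Rpower u (s - 1) * exp (- u)) a b =
                RInt (fun u => s * (Rpower u (s - 1) * exp (- u))) a b).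
  { rewrite (RInt_scal (V:=R_CompleteNormedModule)) by exact Hex. reflexivity. }
  rewrite Hs2. apply RInt_le. exact Hab. eexists; exact Hi.
  apply (ex_RInt_scal (V:=R_NormedModule)). exact Hex.
  intros u Hu.
  assert (exp (- b) <= exp (- u)) by (apply exp_le; lra).
  assert (0 <= Rpower u (s - 1)) by (unfold Rpower; left; apply exp_pos).
  unfold E. assert (0 <= s * Rpower u (s - 1)) by nra.
  assert (0 <= (s * Rpower u (s - 1)) * (exp (- u) - exp (- b))) by (apply Rmult_le_pos; lra).
  nra.
Qed.

Lemma series_bound (a : nat -> R) (M : R) :
  (forall n, 0 <= a n) -> (forall n, sum_n a n <= M) -> ex_series a /\ Series a <= M.
Proof.
  intros Hpos HM.
  assert (Hinc : forall n, sum_n a n <= sum_n a (S n)).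
  { intros n. rewrite sum_Sn. unfold plus; simpl. specialize (Hpos (S n)). lra. }
  destruct (ex_finite_lim_seq_incr _ M Hinc HM) as [l Hl].
  assert (Hs : is_series a l) by exact Hl.
  split. exists l; exact Hs.
  rewrite (is_series_unique _ _ Hs).
  assert (H := is_lim_seq_le _ _ _ _ HM Hl (is_lim_seq_const M)). exact H.
Qed.

Lemma partial (alpha : R) (N : nat) : 0 < alpha -> alpha < 1 ->
  sum_n (fun n => term alpha (S n)) N <=
  / (1 - alpha) * RInt (fun u => Rpower u (/ (1 - alpha) - 1) * exp (- u)) 1
     (Rpower (INR (S N)) (1 - alpha)).
Proof.
  intros Ha0 Ha1. set (s := / (1 - alpha)).
  assert (Hsb : s * (1 - alpha) = 1) by (unfold s; field; lra).
  assert (Hs : 0 < s) by (unfold s; apply Rinv_0_lt_compat; lra).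
  induction N as [|N IH].
  - rewrite sum_O. unfold term. simpl INR.
    replace (Rpower 1 alpha) with 1 by (unfold Rpower; rewrite ln_1, Rmult_0_r, exp_0; reflexivity).
    replace (Rpower 1 (1 - alpha)) with 1 by (unfold Rpower; rewrite ln_1, Rmult_0_r, exp_0; reflexivity).
    rewrite RInt_point. unfold zero; simpl. lra.
  - rewrite sum_Sn.
    set (A := sum_n _ N). set (T := term alpha (S (S N))).
    set (x := INR (S N)).
    assert (Hx : 1 <= x) by (unfold x; rewrite S_INR; assert (H := pos_INR N); lra).
    assert (HX : INR (S (S N)) = x + 1) by (unfold x; rewrite (S_INR (S N)); reflexivity).
    destruct (term_bound alpha (x + 1) (S (S N)) Ha0 HX ltac:(lra)) as [_ Ht].
    assert (HT : T <= exp (- Rpower (x + 1) (1 - alpha))) by (unfold T, term; rewrite HX; exact Ht).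
    assert (Hp := piece s (1 - alpha) x ltac:(lra) Hsb Hs Hx).
    rewrite HX.
    assert (H1 : 1 <= Rpower x (1 - alpha)) by (apply Rpower_ge1; lra).
    assert (H2 : Rpower x (1 - alpha) <= Rpower (x + 1) (1 - alpha)) by (apply Rle_Rpower_l; lra).
    rewrite <- (RInt_Chasles _ 1 (Rpower x (1 - alpha))).
    2, 3: apply exRInt_f; lra.
    unfold plus; simpl. fold x in IH. fold A in IH. lra.
Qed.

Theorem lemma7 (alpha : R) (Ha0 : 0 < alpha) (Ha1 : alpha < 1) :
  ex_series (fun n : nat => term alpha (S n)) /\
  Series (fun n : nat => term alpha (S n))
    <= / (1 - alpha) * Gamma (/ (1 - alpha)).
Proof.
  set (s := / (1 - alpha)).
  assert (Hsb : s * (1 - alpha) = 1) by (unfold s; field; lra).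
  assert (Hs : 0 < s) by (unfold s; apply Rinv_0_lt_compat; lra).
  assert (Hs1 : 0 < s - 1) by nra.
  destruct (gen_exists (fun u => Rpower u (s - 1) * exp (- u))
              (2 * exp ((s - 1) * (-1 - ln (/ (2 * (s - 1)))))))
    as [l [Hl Hle]].
  - intros x _. apply f_nonneg.
  - intros a b Ha Hab. apply exRInt_f; auto.
  - intros a b Ha Hab. apply RInt_f_bound; auto.
  - assert (HG : Gamma s = l).
    { unfold Gamma. apply (is_RInt_gen_unique (Fa := at_right 0) (Fb := Rbar_locally p_infty)). exact Hl. }
    rewrite HG. apply series_bound.
    + intros n. unfold term.
      destruct (term_bound alpha (INR (S n)) (S n) Ha0 eq_refl) as [H _].
      rewrite S_INR; assert (H := pos_INR n); lra. exact H.
    + intros n. apply Rle_trans with (1 := partial alpha n Ha0 Ha1). fold s.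
      apply Rmult_le_compat_l. lra. apply Hle. lra.
      apply Rpower_ge1. rewrite S_INR; assert (H := pos_INR n); lra. lra.
Qed.
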